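(* With the setup in the context, for every $X\subseteq E\setminus B$ and every $\mathbf{M}\in A^X$, the set $D_{X,\mathbf{M}}$ is an almost affine code of length $n$ and dimension $n-|X|$ over $A$, whose associated matroid has rank function $r_{D_{X,\mathbf{M}}}(Y)=|Y\setminus(B\cup X)|+r(Y\cap(B\cup X))$ for $Y\subseteq E$. In particular this rank function does not depend on $\mathbf{M}$.
   Context: An almost affine code over a finite alphabet $A$ of length $n$ and dimension $k$ is a subset $C\subseteq A^n$ with $|C|=|A|^k$ such that for every $X\subseteq E=\{1,\dots,n\}$, $\log_{|A|}|C_X|$ is a nonnegative integer ($C_X$ = projection onto coordinates $X$); its associated matroid $M_C$ has rank function $r(X)=\log_{|A|}|C_X|$. Setup: $C$ is an almost affine code of length $n$ and dimension $k$ over $A$ with matroid rank function $r$; $B\subseteq E$ is a basis of $M_C$ (so $|B|=r(B)=k$); $\varphi:A\times A\to A$ is a function such that for every $y\in A$ both $\varphi(y,\cdot)$ and $\varphi(\cdot,y)$ are bijections of $A$. For $\mathbf{m}\in A^{E\setminus B}$, $\Phi_{\mathbf{m}}:A^E\to A^E$ is given by $\Phi_{\mathbf{m}}(\mathbf{w})_i=\mathbf{w}_i$ for $i\in B$ and $\Phi_{\mathbf{m}}(\mathbf{w})_i=\varphi(\mathbf{w}_i,\mathbf{m}_i)$ for $i\in E\setminus B$, and $C_{\mathbf{m}}=\Phi_{\mathbf{m}}(C)$. For $X\subseteq E\setminus B$ and $\mathbf{M}\in A^X$, $D_{X,\mathbf{M}}=\bigcup_{\mathbf{m}\in A^{E\setminus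 B},\ \mathbf{m}_X=\mathbf{M}}C_{\mathbf{m}}$. *)

(* Defs.v *)
From mathcomp Require Import all_boot.
Set Implicit Arguments. Unset Strict Implicit. Unset Printing Implicit Defensive.

Notation word A n := {ffun 'I_n -> A}.

(* Projection of a word onto coordinates X (coordinates outside X erased). *)
Definition projw (A : finType) (n : nat) (X : {set 'I_n}) (w : word A n)
  : {ffun 'I_n -> option A} :=
  [ffun i => if i \in X then Some (w i) else None].

Definition projC (A : finType) (n : nat) (C : {set word A n}) (X : {set 'I_n}) :=
  [set projw X w | w in C].

Definition almost_affine (A : finType) (n k : nat) (C : {set word A n}) : Prop :=
  #|C| = #|A| ^ k /\ forall X : {set 'I_n}, exists m : nat, #|projC C X| = #|A| ^ m.

(* r is the rank function of the matroid M_C: r(X) = log_{|A|} |C_X|. *)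
Definition is_code_rank (A : finType) (n : nat) (C : {set word A n})
  (r : {set 'I_n} -> nat) : Prop :=
  forall X : {set 'I_n}, #|projC C X| = #|A| ^ r X.

Definition is_basis (n : nat) (r : {set 'I_n} -> nat) (B : {set 'I_n}) : Prop :=
  r B = #|B| /\ r B = r setT.

Definition Phi (A : finType) (n : nat) (phi : A -> A -> A) (B : {set 'I_n})
  (m : word A n) (w : word A n) : word A n :=
  [ffun i => if i \in B then w i else phi (w i) (m i)].

Definition Cm (A : finType) (n : nat) (phi : A -> A -> A) (B : {set 'I_n})
  (C : {set word A n}) (m : word A n) : {set word A n} :=
  [set Phi phi B m w | w in C].

(* D_{X,M}: union of C_m over all m with m_X = M (values of m on B irrelevant). *)
Definition DXM (A : finType) (n : nat) (phi : A -> A -> A) (B : {set 'I_n})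
  (C : {set word A n}) (X : {set 'I_n}) (M : word A n) : {set word A n} :=
  \bigcup_(m : word A n | [forall i in X, m i == M i]) Cm phi B C m.

(* Main.v *)
Require Import Defs.
From mathcomp Require Import all_boot.
From mathcomp Require Import zify.
Set Implicit Arguments. Unset Strict Implicit.

Lemma projC_None (A : finType) (n : nat) (D : {set word A n}) Z f i :
  f \in projC D Z -> i \notin Z -> f i = None.
Proof. by case/imsetP=> w _ -> iZ; rewrite /projw ffunE (negbTE iZ). Qed.

Section S.
Variables (A : finType) (n : nat) (phi : A -> A -> A) (B X : {set 'I_n})
  (C : {set word A n}) (M : word A n).
Hypothesis phiL : forall y, bijective (phi y).
Hypothesis phiR : forall y, bijective (fun x => phi x y).

Definition ginv y z := odflt z [pick x | phi y x == z].
Lemma ginvK y z : phi y (ginv y z) = z.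
Proof.
rewrite /ginv; case: pickP => [x /eqP //|H].
case: (phiL y) => g _ gK; have := H (g z); by rewrite /= gK eqxx.
Qed.

Lemma card_projCm Z : #|projC (Cm phi B C M) Z| = #|projC C Z|.
Proof.
pose psi (u : {ffun 'I_n -> option A}) : {ffun 'I_n -> option A} :=
  [ffun i => omap (fun a => if i \in B then a else phi a (M i)) (u i)].
have -> : projC (Cm phi B C M) Z = psi @: projC C Z.
  rewrite /projC /Cm -!imset_comp; apply: eq_imset => c /=.
  apply/ffunP => i; rewrite /psi /projw /Phi !ffunE.
  by case: (i \in Z); case: (i \in B).
apply: card_imset => u v E; apply/ffunP => i.
have := (ffunP _ _).2 E i; rewrite /psi !ffunE.
case: (u i) => [a|]; case: (v i) => [b|] //= [].
case: (i \in B) => [-> //|]; case: (phiR (M i)) => g gK _ Eab.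
by rewrite -(gK a) Eab gK.
Qed.

Lemma card_projT (a0 : A) (S : {set 'I_n}) :
  #|projC [set: word A n] S| = #|A| ^ #|S|.
Proof.
have -> : projC [set: word A n] S = [set f in pffun_on None S (predC1 None)].
  apply/setP => f; rewrite inE; apply/imsetP/pffun_onP.
  - case=> w _ ->; split.
      apply/supportP => i iS; by rewrite /projw ffunE (negbTE iS).
    by move=> _ /imageP[i iS ->]; rewrite /projw ffunE iS.
  - case=> /supportP Hs Hv; exists [ffun i => odflt a0 (f i)]; first by [].
    apply/ffunP => i; rewrite /projw !ffunE; case: ifP => iS.
      have : f i \in predC1 None by apply: Hv; apply/imageP; exists i.
      by case: (f i).
    by rewrite Hs // iS.
rewrite cardsE card_pffun_on; congr (_ ^ _).
by rewrite cardC1 card_option.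
Qed.

Lemma card_projD (a0 : A) (Y : {set 'I_n}) :
  #|projC (DXM phi B C X M) Y| =
  #|A| ^ #|Y :\: (B :|: X)| * #|projC C (Y :&: (B :|: X))|.
Proof.
set Z := Y :&: (B :|: X); set S := Y :\: (B :|: X).
pose merge (p : {ffun 'I_n -> option A} * {ffun 'I_n -> option A}) :
  {ffun 'I_n -> option A} := [ffun i => if i \in Z then p.1 i else p.2 i].
have -> : projC (DXM phi B C X M) Y =
  merge @: setX (projC (Cm phi B C M) Z) (projC [set: word A n] S).
  apply/setP => f; apply/imsetP/imsetP.
  - case=> w /bigcupP [m Hm /imsetP [c cC ->]] ->.
    exists (projw Z (Phi phi B M c), projw S (Phi phi B m c)).
      apply/setXP; split; apply: imset_f => //; first exact: imset_f.
    apply/ffunP => i; rewrite /merge /projw /Phi /Z /S !ffunE !inE /=.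
    have := forallP Hm i; rewrite /=.
    case: (i \in Y); case: (i \in B); case: (i \in X) => //= /eqP -> //.
  - case=> [[u v]] /setXP [/imsetP [w' /imsetP [c cC ->] ->] /imsetP [w0 _ ->]] ->.
    pose m : word A n := [ffun i => if i \in X then M i else ginv (c i) (w0 i)].
    exists (Phi phi B m c).
      apply/bigcupP; exists m; last exact: imset_f.
      by apply/forallP => i; apply/implyP => iX; rewrite /m ffunE iX.
    apply/ffunP => i; rewrite /merge /projw /Phi /Z /S /m !ffunE !inE /=.
    case: (i \in Y); case: (i \in B); case: (i \in X) => //=.
    by rewrite ginvK.
rewrite card_in_imset ?cardsX ?card_projCm ?(card_projT a0) 1?mulnC //.
move=> [u v] [u' v'] /setXP [Hu Hv] /setXP [Hu' Hv'] /= E.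
have Ei := (ffunP _ _).2 E.
congr pair; apply/ffunP => i; have := Ei i; rewrite /merge !ffunE /=.
- case: ifP => // iZ _; rewrite (projC_None Hu) ?iZ // (projC_None Hu') ?iZ //.
- case: ifP => [iZ|//] _.
  have iS : i \notin S by move: iZ; rewrite /Z /S !inE; by case: (i \in Y); case: (i \in B); case: (i \in X).
  by rewrite (projC_None Hv iS) (projC_None Hv' iS).
Qed.
End S.

Theorem mainTheorem8 (A : finType) (n k : nat) (C : {set {ffun 'I_n -> A}})
  (r : {set 'I_n} -> nat) (B : {set 'I_n}) (phi : A -> A -> A) :
  1 < #|A| ->
  almost_affine k C ->
  is_code_rank C r ->
  is_basis r B ->
  #|B| = k ->
  (forall y : A, bijective (phi y)) ->
  (forall y : A, bijective (fun x => phi x y)) ->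
  forall (X : {set 'I_n}) (M : {ffun 'I_n -> A}),
    X \subset ~: B ->
    almost_affine (n - #|X|) (DXM phi B C X M) /\
    is_code_rank (DXM phi B C X M)
      (fun Y => #|Y :\: (B :|: X)| + r (Y :&: (B :|: X))).
Proof.
move=> Hq [HC _] Hr [HrB HrT] HB phiL phiR X M XB.
have : 0 < #|A| by apply: ltnW.
case/card_gt0P => a0 _.
have rank : forall Y, #|projC (DXM phi B C X M) Y| =
   #|A| ^ (#|Y :\: (B :|: X)| + r (Y :&: (B :|: X))).
  by move=> Y; rewrite (@card_projD A n phi B X C M phiL phiR a0) Hr expnD.
split; last exact: rank.
split; last by move=> Y; eexists; exact: rank.
have -> : #|DXM phi B C X M| = #|projC (DXM phi B C X M) setT|.
  rewrite /projC card_imset // => u v /ffunP E; apply/ffunP => i.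
  by have := E i; rewrite !ffunE in_setT; case.
rewrite rank setTI; congr (_ ^ _).
have le1 : #|projC C (B :|: X)| <= #|C| by apply: leq_imset_card.
have le2 : #|projC C B| <= #|projC C (B :|: X)|.
  have -> : projC C B = (fun u : {ffun 'I_n -> option A} =>
       [ffun i => if i \in B then u i else None]) @: projC C (B :|: X).
    rewrite /projC -imset_comp; apply: eq_imset => c /=.
    by apply/ffunP => i; rewrite /projw !ffunE !inE; case: (i \in B); case: (i \in X).
  exact: leq_imset_card.
rewrite Hr HC leq_exp2l // in le1.
rewrite !Hr leq_exp2l // in le2.
have BX0 : #|B :&: X| = 0.
  apply/eqP; rewrite cards_eq0; apply/eqP/setP => i; rewrite !inE.
  have := subsetP XB i; rewrite !inE.
  by case: (i \in X); case: (i \in B) => //= ->.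
have cU := cardsU B X; rewrite BX0 in cU.
have cC := cardsC (B :|: X); rewrite card_ord in cC.
rewrite setTD.
lia.
Qed.
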